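(* Let $\mu\in\mathbb{R}^J$, $T\in\mathbb{R}$, and let $\Lambda\in\mathbb{R}^{J\times J}$ be symmetric positive definite. Consider the constraint \[ \mu^{\top}y+\sqrt{y^{\top}\Lambda y}\le T,\qquad y\in\{0,1\}^J. \tag{C} \] Let $\Delta^{L}$ be an optimal solution of the semidefinite program \[ \min_{\Delta}\ \|\Delta-\Lambda\|_2\ \ \text{s.t.}\ \ 0\preceq\Delta\preceq\Lambda,\ \ 2\sum_{s=1}^J\Delta_{rs}\ge\Delta_{rr}\ \forall r\in[J],\ \ \Delta_{rs}\le 0\ \forall r,s\in[J],\ r\ne s, \] and let $\Delta^{U}$ be an optimal solution of the semidefinite program \[ \min_{\Delta}\ \|\Delta-\Lambda\|_2\ \ \text{s.t.}\ \ \Delta\succeq\Lambda,\ \ 2\sum_{s=1}^J\Delta_{rs}\ge\Delta_{rr}\ \forall r\in[J],\ \ \Delta_{rs}\le 0\ \forall r,s\in[J],\ r\ne s, \] where in both programs $\Delta$ ranges over symmetric $J\times J$ matrices. Then: (a) the function $g^{L}(y)=\mu^{\top}y+\sqrt{y^{\top}\Delta^{L}y}$ is submodular on $\{0,1\}^J$, and every $y$ satisfying (C) satisfies $\mu^{\top}y+\sqrt{y^{\top}\Delta^{L}y}\le T$; (b) the function $g^{U}(y)=\mu^{\top}y+\sqrt{y^{\top}\Delta^{U}y}$ is submodular on $\{0,1\}^J$, and every $y\in\{0,1\}^J$ satisfying $\mu^{\top}y+\sqrt{y^{\top}\Delta^{U}y}\le T$ satisfies (C).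
   Context: $[J]=\{1,\dots,J\}$; $A\preceq B$ means $B-A$ is positive semidefinite; $\|\cdot\|_2$ is the matrix $\ell^2$ norm. A vector $y\in\{0,1\}^J$ is identified with the subset $\{j:y_j=1\}$. A set function $h$ on subsets of $[J]$ is submodular if $h(R\cup\{j\})-h(R)\ge h(S\cup\{j\})-h(S)$ for all $R\subseteq S\subseteq[J]$ and $j\in[J]\setminus S$. *)

(* Defs.v *)
From HB Require Import structures.
From mathcomp Require Import all_boot all_order all_algebra.
From mathcomp Require Import boolp classical_sets reals.
Set Implicit Arguments. Unset Strict Implicit. Unset Printing Implicit Defensive.
Import Order.TTheory GRing.Theory Num.Theory.
Local Open Scope ring_scope.
Local Open Scope classical_set_scope.

Section Defs.
Variables (R : realType) (J : nat).

Definition qform (A : 'M[R]_J) (y : 'cV[R]_J) : R := ((y^T *m A) *m y) 0 0.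

Definition symmetricmx (A : 'M[R]_J) : Prop := A^T = A.

Definition psdmx (A : 'M[R]_J) : Prop :=
  symmetricmx A /\ forall y : 'cV[R]_J, 0 <= qform A y.
Definition pdmx (A : 'M[R]_J) : Prop :=
  symmetricmx A /\ forall y : 'cV[R]_J, y != 0 -> 0 < qform A y.

Definition loewner_le (A B : 'M[R]_J) : Prop := psdmx (B - A).

Definition vnorm2 (x : 'cV[R]_J) : R := Num.sqrt (\sum_i (x i 0) ^+ 2).
Definition mnorm2 (A : 'M[R]_J) : R :=
  sup [set vnorm2 (A *m x) | x in [set x : 'cV[R]_J | vnorm2 x = 1]].

Definition diagdom_nonpos (D : 'M[R]_J) : Prop :=
  (forall r : 'I_J, 2 * (\sum_s D r s) >= D r r) /\
  (forall r s : 'I_J, r != s -> D r s <= 0).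

Definition feasL (Lam D : 'M[R]_J) : Prop :=
  symmetricmx D /\ loewner_le 0 D /\ loewner_le D Lam /\ diagdom_nonpos D.
Definition feasU (Lam D : 'M[R]_J) : Prop :=
  symmetricmx D /\ loewner_le Lam D /\ diagdom_nonpos D.

Definition optimal_sol (feas : 'M[R]_J -> 'M[R]_J -> Prop) (Lam D : 'M[R]_J)
  : Prop :=
  feas Lam D /\ forall D', feas Lam D' -> mnorm2 (D - Lam) <= mnorm2 (D' - Lam).

(* y in {0,1}^J identified with the subset {j : y_j = 1} *)
Definition indvec (S : {set 'I_J}) : 'cV[R]_J := \col_i (i \in S)%:R.

Definition gfun (mu : 'cV[R]_J) (A : 'M[R]_J) (S : {set 'I_J}) : R :=
  (mu^T *m indvec S) 0 0 + Num.sqrt (qform A (indvec S)).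

Definition submodular (h : {set 'I_J} -> R) : Prop :=
  forall (Rs S : {set 'I_J}) (j : 'I_J), Rs \subset S -> j \notin S ->
    h (S :|: [set j]) - h S <= h (Rs :|: [set j]) - h Rs.

End Defs.

(* Main.v *)
Require Import Defs.
From HB Require Import structures.
From mathcomp Require Import all_boot all_order all_algebra.
From mathcomp Require Import reals.
From mathcomp Require Import lra.
Import Order.TTheory GRing.Theory Num.Theory.
Set Implicit Arguments. Unset Strict Implicit.
Local Open Scope ring_scope.
Lemma sqrt_conc (R : realType) (x y a b : R) :
  0 <= x -> x <= y -> 0 <= b -> b <= a ->
  Num.sqrt (y + b) - Num.sqrt y <= Num.sqrt (x + a) - Num.sqrt x.
Proof.
move=> x0 xy b0 ba.
have y0 : 0 <= y by apply: le_trans xy.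
have a0 : 0 <= a by apply: le_trans ba.
have h1 : Num.sqrt (y + b) <= Num.sqrt (y + a) by apply: ler_wsqrtr; lra.
have h2 : Num.sqrt (y + a) * Num.sqrt x <= Num.sqrt (x + a) * Num.sqrt y.
  rewrite -!sqrtrM; try lra.
  apply: ler_wsqrtr; nra.
set s1 := Num.sqrt x in h2 *; set s2 := Num.sqrt y in h2 *.
set s3 := Num.sqrt (x + a) in h2 *; set s4 := Num.sqrt (y + a) in h1 h2 *.
have e1 : s1 ^+ 2 = x by rewrite sqr_sqrtr.
have e2 : s2 ^+ 2 = y by rewrite sqr_sqrtr.
have e3 : s3 ^+ 2 = x + a by rewrite sqr_sqrtr //; lra.
have e4 : s4 ^+ 2 = y + a by rewrite sqr_sqrtr //; lra.
have p1 : 0 <= s1 by apply: sqrtr_ge0.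
have p2 : 0 <= s2 by apply: sqrtr_ge0.
have p3 : 0 <= s3 by apply: sqrtr_ge0.
have p4 : 0 <= s4 by apply: sqrtr_ge0.
have : s4 + s1 <= s3 + s2.
  have hsq : (s4 + s1) ^+ 2 <= (s3 + s2) ^+ 2.
    rewrite !sqrrD e1 e2 e3 e4; nra.
  rewrite -(@ler_pXn2r _ 2) ?nnegrE //; lra.
lra.
Qed.
Definition qS (R : realType) J (D : 'M[R]_J) (S : {set 'I_J}) : R :=
  \sum_(i in S) \sum_(k in S) D i k.

Lemma qformE (R : realType) J (D : 'M[R]_J) S :
  qform D (indvec R S) = qS D S.
Proof.
rewrite /qform /qS !mxE.
rewrite (exchange_big _ _ _ _ (fun i => i \in S)) /=.
rewrite [RHS]big_mkcond /=; apply: eq_bigr => k _.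
rewrite !mxE big_distrl /=.
case: (boolP (k \in S)) => kS.
  rewrite [RHS]big_mkcond; apply: eq_bigr => i _; rewrite !mxE.
  by case: (i \in S); rewrite /= ?mulr1 ?mul1r ?mul0r.
rewrite big1 // => i _; by rewrite !mxE mulr0.
Qed.

Lemma linE (R : realType) J (mu : 'cV[R]_J) S :
  (mu^T *m indvec R S) 0 0 = \sum_(i in S) mu i 0.
Proof.
rewrite mxE [RHS]big_mkcond; apply: eq_bigr => i _; rewrite !mxE.
by case: (i \in S); rewrite /= ?mulr1 ?mulr0.
Qed.
Section S.
Variables (R : realType) (J : nat) (D : 'M[R]_J).
Hypothesis sym : Defs.symmetricmx D.
Hypothesis dd : diagdom_nonpos D.

Lemma Dsym i k : D i k = D k i.
Proof. by have := congr1 (fun M : 'M[R]_J => M k i) sym; rewrite mxE. Qed.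

Lemma qS_add (S : {set 'I_J}) j : j \notin S ->
  qS D (j |: S) = qS D S + (D j j + 2 * \sum_(s in S) D j s).
Proof.
move=> jS; rewrite /qS big_setU1 //= big_setU1 //=.
rewrite [X in _ + X = _](eq_bigr (fun i => D j i + \sum_(k in S) D i k)); last first.
  by move=> i _; rewrite big_setU1 //= Dsym.
rewrite big_split /=.
rewrite mulr2n mulrDl mul1r; lra.
Qed.

Lemma a_anti (Rs S : {set 'I_J}) j : Rs \subset S -> j \notin S ->
  \sum_(s in S) D j s <= \sum_(s in Rs) D j s.
Proof.
move=> RS jS; rewrite (big_setID Rs) /= (setIidPr RS).
rewrite -[X in _ <= X]addr0 lerD2l; apply: sumr_le0 => s.
rewrite in_setD => /andP [_ sS]; apply: dd.2.
by apply/eqP => ej; rewrite ej sS in jS.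
Qed.

Lemma a_nonneg (S : {set 'I_J}) j : j \notin S -> 0 <= D j j + 2 * \sum_(s in S) D j s.
Proof.
move=> jS.
have h := a_anti (Rs := S) (S := [set~ j]) (j := j).
have : S \subset [set~ j].
  by apply/subsetP => s sS; rewrite in_setC1; apply/eqP => e; rewrite -e sS in jS.
move=> /h; rewrite in_setC1 eqxx => /(_ isT) h2.
have h3 := dd.1 j.
rewrite (bigD1 j) //= in h3.
have e : \sum_(s in [set~ j]) D j s = \sum_(i | i != j) D j i.
  by apply: eq_bigl => s; rewrite in_setC1.
rewrite e in h2; lra.
Qed.

Lemma qS_mono_aux n : forall X Rs : {set 'I_J}, #|X| = n -> [disjoint X & Rs] ->
  qS D Rs <= qS D (X :|: Rs).
Proof.
elim: n => [|n IH] X Rs cX dX.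
  by move/eqP: cX; rewrite cards_eq0 => /eqP ->; rewrite set0U.
have : (0 < #|X|)%N by rewrite cX.
rewrite card_gt0 => /set0Pn [x xX].
have cX' : #|X :\ x| = n by have := cardsD1 x X; rewrite xX cX add1n => -[].
have dX' : [disjoint X :\ x & Rs].
  by apply: disjointWl dX; apply: subsetDl.
have := IH _ _ cX' dX'.
have eX : X :|: Rs = x |: ((X :\ x) :|: Rs).
  by rewrite setUA (setD1K xX).
have xn : x \notin (X :\ x) :|: Rs.
  rewrite in_setU in_setD1 eqxx /=.
  by apply/negP => xR; move: dX; rewrite disjoints_subset => /subsetP/(_ x xX); rewrite inE xR.
rewrite eX qS_add //; have := a_nonneg xn; lra.
Qed.

Lemma qS_mono (Rs S : {set 'I_J}) : Rs \subset S -> qS D Rs <= qS D S.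
Proof.
move=> RS; have := @qS_mono_aux _ (S :\: Rs) Rs erefl.
have eS : (S :\: Rs) :|: Rs = S.
  apply/setP => x; rewrite !inE; case xR: (x \in Rs) => /=.
    by rewrite (subsetP RS).
  by rewrite orbF.
rewrite eS; apply.
rewrite disjoints_subset; apply/subsetP => x; rewrite !inE; by case/andP => -> _.
Qed.

Lemma qS_ge0 (S : {set 'I_J}) : 0 <= qS D S.
Proof.
have -> : 0 = qS D set0 by rewrite /qS big_set0.
apply: qS_mono; exact: sub0set.
Qed.

Lemma submod mu : submodular (gfun mu D).
Proof.
move=> Rs S j RS jS.
have jR : j \notin Rs by apply/negP => /(subsetP RS); rewrite (negbTE jS).
rewrite /gfun !linE !qformE ![_ :|: [set j]]setUC !big_setU1 //= !qS_add //.
have h := a_anti RS jS.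
have := @sqrt_conc _ _ _ (D j j + 2 * \sum_(s in Rs) D j s) (D j j + 2 * \sum_(s in S) D j s)
   (qS_ge0 Rs) (qS_mono RS) (a_nonneg jS) ltac:(lra).
lra.
Qed.
End S.

Lemma qformB (R : realType) J (A B : 'M[R]_J) y :
  qform (A - B) y = qform A y - qform B y.
Proof. by rewrite /qform mulmxBr mulmxBl !mxE. Qed.

Lemma gfun_le (R : realType) J (mu : 'cV[R]_J) (A B : 'M[R]_J) S :
  loewner_le A B -> gfun mu A S <= gfun mu B S.
Proof.
rewrite /loewner_le /psdmx => -[_ h]; rewrite /gfun lerD2l; apply: ler_wsqrtr.
by have := h (indvec R S); rewrite qformB subr_ge0.
Qed.

From mathcomp Require Import boolp classical_sets reals.
Unset Implicit Arguments. Set Strict Implicit.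

Theorem proposition2 (R : realType) (J : nat) (mu : 'cV[R]_J) (T : R)
    (Lam DL DU : 'M[R]_J)
    (hLam : pdmx Lam)
    (hDL : optimal_sol (@feasL R J) Lam DL)
    (hDU : optimal_sol (@feasU R J) Lam DU) :
  (submodular (gfun mu DL) /\
     forall S : {set 'I_J}, gfun mu Lam S <= T -> gfun mu DL S <= T) /\
  (submodular (gfun mu DU) /\
     forall S : {set 'I_J}, gfun mu DU S <= T -> gfun mu Lam S <= T).
Proof.
case: hDL => [[sL [_ [leL ddL]]] _]; case: hDU => [[sU [leU ddU]] _].
split; split.
- exact: submod.
- by move=> S h; apply: le_trans h; apply: gfun_le.
- exact: submod.
- by move=> S h; apply: le_trans h; apply: gfun_le.
Qed.
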